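(* Let $G$ be a weighted undirected graph on $n$ vertices with graph Laplacian $L$, let $\pi$ be a partition of its vertex set with indicator matrix $P$ and quotient Laplacian $L^\pi$, and let $E=LP-PL^\pi$. Let $(\lambda,v)$ be an eigenvalue–eigenvector pair of $L^\pi$ and suppose the equitable error satisfies $\|Ev\|\le\delta$. Let $x_1,\dots,x_n$ be an orthonormal eigenbasis of $L$ with $Lx_i=\lambda_ix_i$, let $\gamma>0$, let $\mathcal{A}=\{i:|\lambda_i-\lambda|<\gamma\}$, $m=|\mathcal{A}|$, and $u=\sum_{i\in\mathcal{A}}\langle Pv,x_i\rangle x_i$. Then $$\|Pv-u\|\le\frac{\delta}{\gamma}\sqrt{n-m}.$$
   Context: The graph Laplacian is $L=D-A$, with $A$ the weighted adjacency matrix and $D$ the diagonal matrix of its row sums. For a partition $\pi=\{V_1,\dots,V_k\}$ of the vertices, the indicator matrix $P\in\mathbb{R}^{n\times k}$ has $P_{il}=1$ if $v_i\in V_l$ and $0$ otherwise, and the quotient Laplacian is $L^\pi=(P^TP)^{-1}P^TLP$. The vector $Ev$ is called the equitable error of $v$. $\|\cdot\|$ denotes the Euclidean norm. *)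

(* Defs.v *)
From HB Require Import structures.
From mathcomp Require Import all_boot all_order all_algebra.
Set Implicit Arguments. Unset Strict Implicit. Unset Printing Implicit Defensive.
Import Order.TTheory GRing.Theory Num.Theory.
Local Open Scope ring_scope.

Definition laplacian (R : rcfType) (n : nat) (A : 'M[R]_n) : 'M[R]_n :=
  diag_mx (\row_i \sum_j A i j) - A.

Definition indicator (R : rcfType) (n k : nat) (part : 'I_n -> 'I_k) : 'M[R]_(n, k) :=
  \matrix_(i, l) (part i == l)%:R.

Definition quotient_laplacian (R : rcfType) (n k : nat) (L : 'M[R]_n)
  (P : 'M[R]_(n, k)) : 'M[R]_k :=
  invmx (P^T *m P) *m P^T *m L *m P.

Definition vnorm (R : rcfType) (n : nat) (x : 'cV[R]_n) : R :=
  Num.sqrt (\sum_i (x i 0) ^+ 2).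

Definition vdot (R : rcfType) (n : nat) (x y : 'cV[R]_n) : R :=
  \sum_i x i 0 * y i 0.

(* Main.v *)
Require Import Defs.
From HB Require Import structures.
From mathcomp Require Import all_boot all_order all_algebra.
From mathcomp Require Import ring lra zify.
Import Order.TTheory GRing.Theory Num.Theory.
Local Open Scope ring_scope.

Definition ss {R : rcfType} {n : nat} (x : 'cV[R]_n) : R := (x^T *m x) 0 0.

Lemma ssE {R : rcfType} {n : nat} (x : 'cV[R]_n) : ss x = \sum_i (x i 0) ^+ 2.
Proof. rewrite /ss mxE; apply: eq_bigr => i _; by rewrite mxE expr2. Qed.

Lemma vnormE {R : rcfType} {n : nat} (x : 'cV[R]_n) : vnorm x = Num.sqrt (ss x).
Proof. by rewrite /vnorm ssE. Qed.

Lemma ss_ge0 {R : rcfType} {n : nat} (x : 'cV[R]_n) : 0 <= ss x.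
Proof. rewrite ssE; apply: sumr_ge0 => i _; exact: sqr_ge0. Qed.

Lemma ss_orth {R : rcfType} {n : nat} (X : 'M[R]_n) (y : 'cV[R]_n) :
  X^T *m X = 1%:M -> ss (X *m y) = ss y.
Proof.
move=> hX; rewrite /ss trmx_mul -mulmxA (mulmxA X^T) hX mul1mx //.
Qed.

Theorem mainTheorem8 (R : rcfType) (n k : nat) (A : 'M[R]_n)
  (part : 'I_n -> 'I_k)
  (lambda : R) (v : 'cV[R]_k) (delta : R)
  (X : 'M[R]_n) (lam : 'I_n -> R) (gamma : R) :
  (* weighted undirected graph: symmetric, nonnegative weights *)
  A^T = A ->
  (forall i j, 0 <= A i j) ->
  (* pi is a partition: every block V_l is nonempty *)
  (forall l : 'I_k, exists i : 'I_n, part i = l) ->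
  let L := laplacian A in
  let P : 'M[R]_(n, k) := indicator R part in
  let Lpi := quotient_laplacian L P in
  let E := L *m P - P *m Lpi in
  (* (lambda, v) eigenpair of L^pi *)
  v != 0 ->
  Lpi *m v = lambda *: v ->
  vnorm (E *m v) <= delta ->
  (* columns of X form an orthonormal eigenbasis of L *)
  X^T *m X = 1%:M ->
  (forall i : 'I_n, L *m col i X = lam i *: col i X) ->
  0 < gamma ->
  let cA := [set i : 'I_n | `|lam i - lambda| < gamma] in
  let m := #|cA| in
  let u := \sum_(i in cA) vdot (P *m v) (col i X) *: col i X in
  vnorm (P *m v - u) <= delta / gamma * Num.sqrt ((n - m)%:R).
Proof.
move=> hAT _ _ L P Lpi E _ hv hdelta hX hL hg; cbv zeta.
set cA := [set i | _]. set m := #|cA|. set u := \sum_(i in cA) _.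
have Lsym : L^T = L by rewrite /L /laplacian linearB /= tr_diag_mx hAT.
have hXX : X *m X^T = 1%:M by apply: mulmx1C.
have hXT : X^T^T *m X^T = 1%:M by rewrite trmxK.
have LX : forall j i, (L *m X) j i = lam i * X j i.
  move=> j i; have := hL i; rewrite !colE mulmxA -!colE.
  by move=> /matrixP /(_ j 0); rewrite !mxE.
set w := P *m v.
set c := X^T *m w.
have he : E *m v = L *m w - lambda *: w.
  by rewrite /E mulmxBl -(mulmxA P) hv -mulmxA scalemxAr.
have hc : forall i, (X^T *m (E *m v)) i 0 = (lam i - lambda) * c i 0.
  have XL : X^T *m L = (L *m X)^T by rewrite trmx_mul Lsym.
  move=> i; rewrite he mulmxBr mulmxA XL -scalemxAr.
  rewrite !mxE mulrBl; congr (_ - _).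
  rewrite mulr_sumr; apply: eq_bigr => j _; rewrite [(_^T) i j]mxE LX [X^T i j]mxE mulrA //.
have hd0 : 0 <= delta by apply: le_trans hdelta; exact: sqrtr_ge0.
have hS : ss (E *m v) <= delta ^+ 2.
  rewrite vnormE in hdelta.
  have h1 := sqr_sqrtr (ss_ge0 (E *m v)).
  have h2 := sqrtr_ge0 (ss (E *m v)).
  move: h1 h2 hdelta; set s := Num.sqrt _ => h1 h2 h3; rewrite -h1.
  by rewrite lerXn2r // nnegrE.
have hci : forall i, i \notin cA -> c i 0 ^+ 2 <= (delta / gamma) ^+ 2.
  move=> i hi.
  have hgi : gamma <= `|lam i - lambda| by move: hi; rewrite inE -leNgt.
  have hgi2 : gamma ^+ 2 <= (lam i - lambda) ^+ 2.
    have := real_normK (num_real (lam i - lambda)); move: hgi.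
    set x := lam i - lambda; set a := `|x| => h1 h2; rewrite -h2; nra.
  have hsum : ((lam i - lambda) * c i 0) ^+ 2 <= ss (E *m v).
    rewrite -(ss_orth X^T (E *m v) hXT) ssE (bigD1 i) //= hc lerDl.
    apply: sumr_ge0 => j _; exact: sqr_ge0.
  rewrite expr_div_n ler_pdivlMr ?exprn_gt0 //.
  rewrite exprMn in hsum.
  apply: le_trans hS; apply: le_trans hsum.
  by rewrite mulrC ler_wpM2r // sqr_ge0.
set d : 'cV[R]_n := \col_i (if i \in cA then 0 else c i 0).
have hwu : w - u = X *m d.
  have -> : w = X *m c by rewrite /c mulmxA hXX mul1mx.
  apply/matrixP => j z; rewrite (ord1 z) !mxE summxE.
  rewrite (bigID (fun i => i \in cA)) /=.
  have -> : \sum_(k0 in cA) (vdot (P *m v) (col k0 X) *: col k0 X) j 0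
            = \sum_(i in cA) X j i * c i 0.
    apply: eq_bigr => i _; rewrite !mxE /vdot mulrC; congr (_ * _).
    by apply: eq_bigr => l _; rewrite !mxE mulrC.
  have -> : \sum_(j0 < n) X j j0 * d j0 0 = \sum_(i < n | i \notin cA) X j i * c i 0.
    rewrite (bigID (fun i => i \in cA)) /= big1 ?add0r; last first.
      by move=> i hi; rewrite !mxE hi mulr0.
    by apply: eq_bigr => i hi; rewrite !mxE (negbTE hi).
  by rewrite addrAC subrr add0r.
rewrite hwu vnormE ss_orth // ssE.
have hcard : #|[pred i : 'I_n | i \notin cA]| = (n - m)%N.
  have := cardC cA; rewrite card_ord => h.
  have hy : #|[pred i : 'I_n | i \notin cA]| = #|[predC cA]|.
    by apply: eq_card => i; rewrite !inE.
  rewrite /m; move: h hy; lia.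
have hs : \sum_i d i 0 ^+ 2 <= (n - m)%:R * (delta/gamma)^+2.
  rewrite (bigID (fun i => i \in cA)) /= big1 ?add0r; last first.
    by move=> i hi; rewrite mxE hi expr0n.
  apply: (@le_trans _ _ (\sum_(i < n | i \notin cA) (delta/gamma)^+2)).
    by apply: ler_sum => i hi; rewrite mxE (negbTE hi); apply: hci.
  rewrite sumr_const hcard mulr_natl //.
have hdg : 0 <= delta / gamma by rewrite divr_ge0 // ltW.
apply: (@le_trans _ _ (Num.sqrt ((n - m)%:R * (delta/gamma)^+2))).
  rewrite ler_sqrt; first exact: hs.
  apply: mulr_ge0; [exact: ler0n | exact: sqr_ge0].
rewrite (sqrtrM _ (ler0n _ _)) sqrtr_sqr (ger0_norm hdg) mulrC.
exact: lexx.
Qed.
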